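(* Let $n\ge2$ be even and $L\ge1$ an integer. Let $\rho_{\text{in}}=U(\boldsymbol\beta)(|0\rangle\langle0|)^{\otimes n}U(\boldsymbol\beta)^\dagger$, where $U(\boldsymbol\beta)=V_{2L+1}U_LU_{L-1}\cdots U_1X^{\otimes n}$ is the $L$-layer encoding circuit described in the context. Then $$\mathbb{E}_{\boldsymbol\beta}\,\alpha(\rho_{\text{in}})\ge 2^{-2L},$$ where $\alpha(\rho)=\text{Tr}[(\sigma_1\otimes I^{\otimes(n-1)})\rho]^2+\text{Tr}[(\sigma_3\otimes I^{\otimes(n-1)})\rho]^2$ and the expectation is over all parameters $\beta_j^{(k)}$ drawn independently and uniformly from $[0,2\pi]$.
   Context: Pauli matrices $\sigma_0=I,\sigma_1=X,\sigma_2=Y,\sigma_3=Z$. Qubits are numbered $1,\dots,n$. For $j=1,\dots,2L+1$, $V_j=W_j^{(1)}\otimes\cdots\otimes W_j^{(n)}$ with $W_j^{(k)}=e^{-i\beta_j^{(k)}\sigma_2}$ acting on qubit $k$. $CZ$ on qubits $(a,b)$ is $|0\rangle\langle0|_a\otimes I_b+|1\rangle\langle1|_a\otimes(\sigma_3)_b$. $CZ_1$ is the product of $CZ$ gates on the pairs $(1,2),(3,4),\dots,(n-1,n)$; $CZ_2$ is the product of $CZ$ gates on the pairs $(2,3),(4,5),\dots,(n-2,n-1)$ and $(n,1)$. The $j$-th alternating layer is $U_j=CZ_1V_{2j}CZ_2V_{2j-1}$. *)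

(* Defs.v *)
From HB Require Import structures.
From mathcomp Require Import all_boot all_order all_algebra.
From mathcomp Require Import all_classical all_reals all_analysis.
From mathcomp Require Import complex.
Import Order.TTheory GRing.Theory Num.Theory.
Import numFieldNormedType.Exports.
Local Open Scope ring_scope.
Local Open Scope complex_scope.

(* Computational basis of n qubits: bit strings x, with x k the value of
   qubit k+1 (qubits are numbered 1..n in the paper). *)
Definition basis (n : nat) := {ffun 'I_n -> bool}.

Definition op (R : realType) (n : nat) := basis n -> basis n -> R[i].

Definition opmul (R : realType) n (A B : op R n) : op R n :=
  fun x y => \sum_(z : basis n) A x z * B z y.
Definition opadd (R : realType) n (A B : op R n) : op R n :=
  fun x y => A x y + B x y.
Definition opid (R : realType) n : op R n := fun x y => (x == y)%:R.
Definition opadj (R : realType) n (A : op R n) : op R n :=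
  fun x y => (A y x)^*.
Definition optr (R : realType) n (A : op R n) : R[i] :=
  \sum_(x : basis n) A x x.

(* Single-qubit operators, as 2x2 matrices indexed by bool (false = |0>). *)
Definition gate1 (R : realType) := bool -> bool -> R[i].
Definition sI (R : realType) : gate1 R := fun a b => (a == b)%:R.
Definition sX (R : realType) : gate1 R := fun a b => (a != b)%:R.
Definition sY (R : realType) : gate1 R :=
  fun a b => if a == b then 0 else if b then - 'i else 'i.
Definition sZ (R : realType) : gate1 R :=
  fun a b => if a == b then (if a then -1 else 1) else 0.
Definition proj0 (R : realType) : gate1 R := fun a b => ((~~ a) && (~~ b))%:R.
Definition proj1 (R : realType) : gate1 R := fun a b => (a && b)%:R.

(* W(beta) = exp(-i beta sigma_2) = cos beta I - i sin beta sigma_2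
   (sigma_2^2 = I). *)
Definition Wgate (R : realType) (beta : R) : gate1 R :=
  fun a b => (cos beta)%:C * sI R a b - 'i * (sin beta)%:C * sY R a b.

(* Tensor product G_1 (x) ... (x) G_n; G k acts on qubit k+1. *)
Definition tens (R : realType) n (G : 'I_n -> gate1 R) : op R n :=
  fun x y => \prod_(k < n) G k (x k) (y k).

(* G acting on qubit q (1-based), identity elsewhere. *)
Definition onq (R : realType) n (q : nat) (G : gate1 R) : op R n :=
  tens R n (fun k : 'I_n => if k.+1 == q then G else sI R).

(* CZ on qubits (a,b): |0><0|_a (x) I_b + |1><1|_a (x) (sigma_3)_b. *)
Definition CZ (R : realType) n (a b : nat) : op R n :=
  opadd R n (onq R n a (proj0 R))
        (tens R n (fun k : 'I_n => if k.+1 == a then proj1 R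
                               else if k.+1 == b then sZ R else sI R)).

Definition opprod (R : realType) n (s : seq (op R n)) : op R n :=
  foldr (opmul R n) (opid R n) s.

Definition CZ1 (R : realType) n : op R n :=
  opprod R n [seq CZ R n i.*2.+1 i.*2.+2 | i <- iota 0 n./2].
Definition CZ2 (R : realType) n : op R n :=
  opprod R n (rcons [seq CZ R n i.*2.+2 i.*2.+3 | i <- iota 0 n./2.-1]
                (CZ R n n 1)).

(* Parameters: beta j k = beta_j^{(k)} (both indices 1-based). *)
Definition params (R : realType) := nat -> nat -> R.

Definition Vlayer (R : realType) n (beta : params R) (j : nat) : op R n :=
  tens R n (fun k : 'I_n => Wgate R (beta j k.+1)).

Definition Ulayer (R : realType) n (beta : params R) (j : nat) : op R n :=
  opprod R n [:: CZ1 R n; Vlayer R n beta j.*2; CZ2 R n; Vlayer R n beta j.*2.-1].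

Fixpoint Ulayers (R : realType) n (beta : params R) (L : nat) : op R n :=
  match L with
  | 0 => opid R n
  | L'.+1 => opmul R n (Ulayer R n beta L'.+1) (Ulayers R n beta L')
  end.

Definition Ucirc (R : realType) n (L : nat) (beta : params R) : op R n :=
  opprod R n [:: Vlayer R n beta L.*2.+1; Ulayers R n beta L; tens R n (fun _ => sX R)].

Definition rho0 (R : realType) n : op R n := tens R n (fun _ => proj0 R).

Definition rho_in (R : realType) n (L : nat) (beta : params R) : op R n :=
  opprod R n [:: Ucirc R n L beta; rho0 R n; opadj R n (Ucirc R n L beta)].

(* alpha(rho) = Tr[(sigma_1 (x) I) rho]^2 + Tr[(sigma_3 (x) I) rho]^2.
   The traces are real for Hermitian rho; we take their real parts. *)
Definition alpha (R : realType) n (rho : op R n) : R :=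
  (complex.Re (optr R n (opmul R n (onq R n 1 (sX R)) rho))) ^+ 2 +
  (complex.Re (optr R n (opmul R n (onq R n 1 (sZ R)) rho))) ^+ 2.

(* Expectation over independent uniform parameters on [0, 2pi] for the
   coordinates listed in ps: iterated normalized Lebesgue integrals. *)
Definition upd (R : realType) (b : params R) (p : nat * nat) (t : R) : params R :=
  fun j k => if (j, k) == p then t else b j k.

Fixpoint expect (R : realType) (ps : seq (nat * nat)) (f : params R -> R)
    (b : params R) : R :=
  match ps with
  | [::] => f b
  | p :: ps' => (pi *+ 2)^-1 *
      (\int[@lebesgue_measure R]_(t in `[0, pi *+ 2]) expect R ps' f (upd R b p t))
  end.

Definition all_params (n L : nat) : seq (nat * nat) :=
  [seq (j, k) | j <- iota 1 L.*2.+1, k <- iota 1 n].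

(* Main.v *)
Require Import Defs.
From HB Require Import structures.
From mathcomp Require Import all_boot all_order all_algebra.
From mathcomp Require Import all_classical all_reals all_analysis.
From mathcomp Require Import complex.
From mathcomp Require Import ring lra.
Import Order.TTheory GRing.Theory Num.Theory.
Import numFieldNormedType.Exports.
Import Defs.
Local Open Scope ring_scope.

Section Analysis.
Context {R : realType}.

Local Notation I := (`[0%R, (pi *+ 2)%R]%classic : set R).

Definition avg (g : R -> R) : R :=
  (pi *+ 2)^-1 * Rintegral (@lebesgue_measure R) `[0, pi *+ 2]%classic g.

Lemma pi2_gt0 : 0 < pi *+ 2 :> R.
Proof. by rewrite mulrn_wgt0 // pi_gt0. Qed.

Lemma muI : lebesgue_measure (`[0%R, (pi *+ 2)%R]%classic : set (measurableTypeR R)) = (pi *+ 2)%:E.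
Proof.
have := lebesgue_measure_itv (`[0%R, (pi *+ 2)%R] : interval R).
by rewrite /= lte_fin pi2_gt0 oppr0 adde0.
Qed.
Lemma mI : measurable (`[0%R, (pi *+ 2)%R]%classic : set (measurableTypeR R)).
Proof. exact: measurable_itv. Qed.

Lemma ge0_le_integral_nm d (T : measurableType d) (mu : {measure set T -> \bar R}) (D : set T) (f g : T -> \bar R) :
  (forall x, D x -> (0 <= f x)%E) -> (forall x, D x -> (f x <= g x)%E) ->
  (\int[mu]_(x in D) f x <= \int[mu]_(x in D) g x)%E.
Proof.
move=> f0 fg.
have g0 : forall x, D x -> (0 <= g x)%E by move=> x Dx; exact: le_trans (f0 x Dx) (fg x Dx).
rewrite !ge0_integralE //.
apply: le_ereal_sup => _ [h hf <-]; exists h => // x; apply: le_trans (hf x) _.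
rewrite /patch; case: ifP => // /set_mem Dx; exact: fg.
Qed.

Lemma int_cst (M : R) : (\int[@lebesgue_measure R]_(x in I) (M%:E))%E = (M * (pi *+ 2))%:E.
Proof. by rewrite integral_cst ?mI // EFinM; congr (_ * _)%E; exact: muI. Qed.

Lemma int_bound (g : R -> R) M : (forall t, 0 <= g t <= M) ->
  (0 <= \int[@lebesgue_measure R]_(x in I) (g x)%:E)%E /\
  (\int[@lebesgue_measure R]_(x in I) (g x)%:E <= (M * (pi *+ 2))%:E)%E.
Proof.
move=> gM; split.
  by apply: integral_ge0 => x _; rewrite lee_fin; case/andP: (gM x).
rewrite -int_cst; apply: ge0_le_integral_nm => x _; rewrite lee_fin; by case/andP: (gM x).
Qed.

Lemma avg_bound g M : (forall t, 0 <= g t <= M) -> 0 <= avg g <= M.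
Proof.
move=> gM; have [i0 iM] := @int_bound g M gM.
have fin : (\int[@lebesgue_measure R]_(x in I) (g x)%:E)%E \is a fin_num.
  by rewrite ge0_fin_numE // (le_lt_trans iM) // ltry.
have p0 := pi2_gt0.
rewrite /avg /Rintegral; apply/andP; split.
  by apply: mulr_ge0; [rewrite invr_ge0 ltW | exact: fine_ge0].
rewrite -(ler_pM2l p0) mulrA mulfV ?gt_eqF // mul1r mulrC.
by apply: (fine_le fin _ iM).
Qed.

Lemma avg_le h g M : (forall t, 0 <= h t) -> (forall t, h t <= g t) -> (forall t, g t <= M) ->
  avg h <= avg g.
Proof.
move=> h0 hg gM.
have gb : forall t, 0 <= g t <= M by move=> t; rewrite gM andbT (le_trans (h0 t) (hg t)).
have hb : forall t, 0 <= h t <= M by move=> t; rewrite h0 (le_trans (hg t) (gM t)).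
have [i0 iM] := @int_bound g M gb; have [j0 jM] := @int_bound h M hb.
have fin1 : (\int[@lebesgue_measure R]_(x in I) (g x)%:E)%E \is a fin_num.
  by rewrite ge0_fin_numE // (le_lt_trans iM) // ltry.
have fin2 : (\int[@lebesgue_measure R]_(x in I) (h x)%:E)%E \is a fin_num.
  by rewrite ge0_fin_numE // (le_lt_trans jM) // ltry.
rewrite /avg /Rintegral; apply: ler_wpM2l; first by rewrite invr_ge0 ltW // pi2_gt0.
apply: (fine_le fin2 fin1); apply: ge0_le_integral_nm => x _; rewrite lee_fin //.
Qed.

Lemma avg_cst c : avg (fun _ => c) = c.
Proof.
rewrite /avg /Rintegral int_cst /= mulrCA mulVf ?mulr1 //.
by rewrite gt_eqF // pi2_gt0.
Qed.

Let Cf : R -> R := (cos ^+ 2 - sin ^+ 2)%R.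
Let Sf : R -> R := (2 *: (cos * sin))%R.

Lemma avg_trig k A B :
  avg (fun t => k * ((cos t ^+ 2 - sin t ^+ 2) * A - (cos t * sin t *+ 2) * B) ^+ 2)
  = k * (A ^+ 2 + B ^+ 2) / 2.
Proof.
set h := fun t => _.
pose k1 := k * (A ^+ 2 + B ^+ 2) / 2; pose k2 := k * (A ^+ 2 - B ^+ 2) / 4; pose k3 := k * A * B / 2.
pose F : R -> R := (k1 *: id + k2 *: (Cf * Sf) + k3 *: (Cf ^+ 2))%R.
have dF : forall t : R, is_derive t (1:R) F (h t).
  move=> t; apply: is_derive_eq.
  rewrite /h /k1 /k2 /k3 /Cf /Sf !fctE /GRing.scale /=.
  have e := cos2Dsin2 t.
  set c := cos t in e *; set s := sin t in e *.
  have e2 : (c ^+ 2 - s ^+ 2) ^+ 2 + (2 * (c * s)) ^+ 2 = 1.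
    by transitivity ((c ^+ 2 + s ^+ 2) ^+ 2); [ring | rewrite e expr1n].
  apply/eqP; rewrite -subr_eq0; apply/eqP.
  transitivity (k * (A^+2+B^+2)/2 * (1 - ((c^+2 - s^+2)^+2 + (2*(c*s))^+2))).
    by field.
  by rewrite e2 subrr mulr0.
have derF : forall u : R, derivable F u 1 by move=> u; case: (dF u).
have cF : continuous F.
  by move=> t; apply: differentiable_continuous; apply/derivable1_diffP.
have ch : continuous h.
  pose H : R -> R := (cst k * (Cf * cst A - Sf * cst B) ^+ 2)%R.
  have -> : h = H.
    by apply/funext => u; rewrite /H /h /Cf /Sf !fctE /GRing.scale /cst /=; ring.
  move=> u; have hd : derivable H u 1 by apply: ex_derive.
  exact/differentiable_continuous/derivable1_diffP.
have I := @continuous_FTC2 R h F 0 (pi *+ 2) pi2_gt0 (continuous_subspaceT ch).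
rewrite /avg /Rintegral I; last first.
  by move=> t _; rewrite derive1E; exact: derive_val.
  split.
  - by move=> t _; exact: derF.
  - exact: cvg_at_right_filter (cF 0).
  - exact: cvg_at_left_filter (cF _).
rewrite /= /F /Cf /Sf !fctE /GRing.scale /= cos2pi sin2pi cos0 sin0.
rewrite /k1 /k2 /k3. have P0 : (pi:R) != 0 by rewrite gt_eqF // pi_gt0. move: P0; generalize (pi : R) => P P0. by field.
Qed.

End Analysis.

Local Open Scope complex_scope.

Section Q.
Context {R : realType}.

Definition vapply {n} (A : op R n) (v : basis n -> R[i]) : basis n -> R[i] :=
  fun x => \sum_z A x z * v z.
Definition form {n} (T : op R n) (v : basis n -> R[i]) : R[i] :=
  \sum_x \sum_y (v x)^* * T x y * v y.
Definition gmul (g h : gate1 R) : gate1 R := fun a b => \sum_c g a c * h c b.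
Definition gadj (g : gate1 R) : gate1 R := fun a b => (g b a)^*.
Definition diagop {n} (d : basis n -> R[i]) : op R n := fun x y => (x == y)%:R * d x.
Definition unimod {n} (d : basis n -> R[i]) := forall x, (d x)^* * d x = 1.
Definition isDU {n} (A : op R n) := exists d, unimod d /\ A = diagop d.

Lemma sum_ind_r n (F : basis n -> R[i]) a : \sum_z F z * (z == a)%:R = F a.
Proof.
rewrite (bigD1 a) //= eqxx mulr1 big1 ?addr0 // => z za.
by rewrite (negbTE za) mulr0.
Qed.

Lemma sum_ind_l n (F : basis n -> R[i]) a : \sum_z (a == z)%:R * F z = F a.
Proof.
rewrite (bigD1 a) //= eqxx mul1r big1 ?addr0 // => z za.
by rewrite eq_sym (negbTE za) mul0r.
Qed.

Lemma vapply_mul n (A B : op R n) v : vapply (opmul R n A B) v = vapply A (vapply B v).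
Proof.
apply/funext => x; rewrite /vapply /opmul.
transitivity (\sum_z \sum_w A x w * (B w z * v z)).
  by apply: eq_bigr => z _; rewrite mulr_suml; apply: eq_bigr => w _; rewrite mulrA.
by rewrite exchange_big; apply: eq_bigr => w _; rewrite mulr_sumr.
Qed.

Lemma vapply_id n v : vapply (opid R n) v = v.
Proof. by apply/funext => x; rewrite /vapply /opid sum_ind_l. Qed.

Lemma form_apply n (T A : op R n) v :
  form T (vapply A v) = form (opmul R n (opadj R n A) (opmul R n T A)) v.
Proof.
rewrite /form /vapply /opmul /opadj.
transitivity (\sum_x \sum_y \sum_z \sum_w
   ((v z)^* * ((A x z)^* * (T x y * A y w)) * v w)).
  apply: eq_bigr => x _; apply: eq_bigr => y _.
  rewrite rmorph_sum !mulr_suml; apply: eq_bigr => z _.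
  rewrite !mulr_sumr; apply: eq_bigr => w _; rewrite rmorphM; ring.
transitivity (\sum_z \sum_w \sum_x \sum_y
   ((v z)^* * ((A x z)^* * (T x y * A y w)) * v w)); last first.
  apply: eq_bigr => z _; apply: eq_bigr => w _.
  symmetry; rewrite mulr_sumr mulr_suml; apply: eq_bigr => x _.
  rewrite !mulr_sumr mulr_suml; apply: eq_bigr => y _; ring.
transitivity (\sum_x \sum_z \sum_w \sum_y
   ((v z)^* * ((A x z)^* * (T x y * A y w)) * v w)).
  apply: eq_bigr => x _.
  rewrite exchange_big; apply: eq_bigr => z _; exact: exchange_big.
rewrite exchange_big; apply: eq_bigr => z _; exact: exchange_big.
Qed.

Lemma tens_mul n (F G : 'I_n -> gate1 R) :
  opmul R n (tens R n F) (tens R n G) = tens R n (fun k => gmul (F k) (G k)).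
Proof.
apply/funext => x; apply/funext => y; rewrite /opmul /tens /gmul.
rewrite bigA_distr_bigA /=; apply: eq_bigr => z _; by rewrite -big_split.
Qed.

Lemma tens_adj n (F : 'I_n -> gate1 R) :
  opadj R n (tens R n F) = tens R n (fun k => gadj (F k)).
Proof. by apply/funext => x; apply/funext => y; rewrite /opadj /tens /gadj rmorph_prod. Qed.

Lemma prod_eq_ind n (x y : basis n) :
  \prod_k (((x k == y k)%:R) : R[i]) = (x == y)%:R.
Proof.
case: (eqVneq x y) => [-> | nxy]; first by rewrite big1 // => k _; rewrite eqxx.
have : ~~ [forall k, x k == y k].
  apply: contra nxy => /forallP H; apply/eqP/ffunP => k; exact/eqP/H.
rewrite negb_forall => /existsP [k kxy].
by rewrite (bigD1 k) //= (negbTE kxy) mul0r.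
Qed.

Lemma tens_diag n (g : 'I_n -> bool -> R[i]) :
  tens R n (fun k a b => (a == b)%:R * g k a) = diagop (fun x => \prod_k g k (x k)).
Proof.
apply/funext => x; apply/funext => y; rewrite /tens /diagop big_split /=.
by rewrite prod_eq_ind.
Qed.

Lemma vapply_diag n (d : basis n -> R[i]) v : vapply (diagop d) v = fun x => d x * v x.
Proof. by apply/funext => x; rewrite /vapply /diagop; under eq_bigr do rewrite -mulrA; rewrite sum_ind_l. Qed.

Lemma form_diag n (t : basis n -> R[i]) v : form (diagop t) v = \sum_x (v x)^* * t x * v x.
Proof.
rewrite /form /diagop; apply: eq_bigr => x _.
transitivity (\sum_y (x == y)%:R * ((v x)^* * t x * v y)).
  by apply: eq_bigr => y _; ring.
rewrite sum_ind_l. done.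
Qed.

Lemma form_DU n (t d : basis n -> R[i]) v : unimod d ->
  form (diagop t) (vapply (diagop d) v) = form (diagop t) v.
Proof.
move=> ud; rewrite !form_diag vapply_diag; apply: eq_bigr => x _.
rewrite rmorphM.
transitivity ((d x)^* * d x * ((v x)^* * t x * v x)); first by ring.
by rewrite ud mul1r.
Qed.

Lemma diag_mul n (d1 d2 : basis n -> R[i]) :
  opmul R n (diagop d1) (diagop d2) = diagop (fun x => d1 x * d2 x).
Proof.
apply/funext => x; apply/funext => y; rewrite /opmul /diagop.
transitivity (\sum_z (x == z)%:R * (d1 x * ((z == y)%:R * d2 z))).
  by apply: eq_bigr => z _; ring.
rewrite sum_ind_l; ring.
Qed.

Lemma isDU_mul n (A B : op R n) : isDU A -> isDU B -> isDU (opmul R n A B).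
Proof.
move=> [d1 [u1 ->]] [d2 [u2 ->]]; exists (fun x => d1 x * d2 x); split; last exact: diag_mul.
move=> x; rewrite rmorphM.
transitivity ((d1 x)^* * d1 x * ((d2 x)^* * d2 x)); first by ring.
by rewrite u1 u2 mulr1.
Qed.

Lemma isDU_id n : isDU (opid R n).
Proof.
exists (fun _ => 1); split; first by move=> x; rewrite rmorph1 mulr1.
by apply/funext => x; apply/funext => y; rewrite /opid /diagop mulr1.
Qed.

Lemma isDU_foldr n (T : eqType) (f : T -> op R n) z (l : seq T) :
  isDU z -> (forall i, i \in l -> isDU (f i)) -> isDU (foldr (opmul R n) z (map f l)).
Proof.
move=> hz; elim: l => [|a l IH] H //=.
apply: isDU_mul; first by apply: H; rewrite inE eqxx.
by apply: IH => i il; apply: H; rewrite inE il orbT.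
Qed.

Lemma CZ_DU n a b : (0 < a <= n)%N -> b != a -> isDU (CZ R n a b).
Proof.
case: a => [//|a] /= an ba.
have ka_lt : (a < n)%N by [].
pose ka : 'I_n := Ordinal ka_lt.
have kaE : forall k : 'I_n, (k.+1 == a.+1) = (k == ka).
  by move=> k; rewrite eqSS.
rewrite /CZ /onq.
have -> : (fun k : 'I_n => if k.+1 == a.+1 then proj0 R else sI R) =
   (fun k a' b' => (a' == b')%:R * (if k.+1 == a.+1 then (~~ a')%:R else 1)).
  apply/funext => k; apply/funext => a'; apply/funext => b'.
  by case: ifP => _; case: a'; case: b'; rewrite /proj0 /sI /= ?mulr1 ?mul1r ?mulr0 ?mul0r.
have -> : (fun k : 'I_n => if k.+1 == a.+1 then proj1 R else if k.+1 == b then sZ R else sI R) =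
   (fun k a' b' => (a' == b')%:R * (if k.+1 == a.+1 then (a' : nat)%:R
                     else if k.+1 == b then (if a' then -1 else 1) else 1)).
  apply/funext => k; apply/funext => a'; apply/funext => b'.
  by case: ifP => _; [|case: ifP => _]; case: a'; case: b'; rewrite /proj1 /sZ /sI /= ?mulr1 ?mul1r ?mulr0 ?mul0r.
rewrite !tens_diag.
set d1 := fun x => _; set d2 := fun x => _.
exists (fun x => d1 x + d2 x); split; last first.
  by apply/funext => x; apply/funext => y; rewrite /opadd /diagop mulrDr.
move=> x.
pose sg := \prod_(k < n | k != ka) (if k.+1 == b then (if x k then -1 else 1) else (1 : R[i])).
have usg : sg^* * sg = 1.
  rewrite /sg rmorph_prod -big_split big1 // => k _ /=.
  case: ifP => _; last by rewrite rmorph1 mulr1.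
  by case: (x k); rewrite ?rmorphN1 ?rmorph1 ?mulrNN mulr1.
have e1 : d1 x = (~~ x ka)%:R.
  rewrite /d1 (bigD1 ka) //= eqxx big1 ?mulr1 // => k kk.
  by rewrite kaE (negbTE kk).
have e2 : d2 x = (x ka : nat)%:R * sg.
  rewrite /d2 (bigD1 ka) //= eqxx; congr (_ * _); apply: eq_bigr => k kk.
  by rewrite kaE (negbTE kk).
rewrite e1 e2; case: (x ka) => /=; last by rewrite mul0r addr0 rmorph1 mulr1.
by rewrite mul1r add0r.
Qed.

Lemma half_double_le n : ((n./2).*2 <= n)%N.
Proof. by rewrite -{2}(odd_double_half n) leq_addl. Qed.

Lemma CZ1_DU n : isDU (CZ1 R n).
Proof.
apply: isDU_foldr; first exact: isDU_id.
move=> i; rewrite mem_iota add0n /= => il; apply: CZ_DU; last first.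
  by rewrite eqSS; apply/negP => /eqP H; have := congr1 odd H; rewrite /= !odd_double.
apply/andP; split => //.
apply: (leq_trans _ (half_double_le n)); apply: (leq_trans (leqnSn _)).
by rewrite -doubleS leq_double.
Qed.

Lemma CZ2_DU n : (2 <= n)%N -> isDU (CZ2 R n).
Proof.
move=> n2; rewrite /CZ2 /opprod foldr_rcons.
apply: isDU_foldr.
  apply: isDU_mul; last exact: isDU_id.
  apply: CZ_DU; first by rewrite (leq_trans _ n2) //= leqnn.
  by apply/negP => /eqP H; move: n2; rewrite -H.
move=> i; rewrite mem_iota add0n /= => il; apply: CZ_DU; last first.
  by rewrite eqSS; apply/negP => /eqP H; have := congr1 odd H; rewrite /= !odd_double.
apply/andP; split => //.
apply: (leq_trans _ (half_double_le n)); rewrite -doubleS leq_double.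
exact: (leq_trans il (leq_pred _)).
Qed.

Lemma ii : 'i * 'i = -1 :> R[i].
Proof. by rewrite -expr2 sqr_i. Qed.

Lemma WgateE (t : R) a b : Wgate R t a b =
  if a then (if b then (cos t)%:C else (sin t)%:C)
  else (if b then - (sin t)%:C else (cos t)%:C).
Proof.
have hi := ii.
case: a; case: b; rewrite /Wgate /sI /sY /=.
- by rewrite mulr1 mulr0 subr0.
- by rewrite mulr0 sub0r mulrAC hi mulN1r opprK.
- by rewrite mulr0 sub0r mulrN opprK mulrAC hi mulN1r.
- by rewrite mulr1 mulr0 subr0.
Qed.

Lemma Wff t : Wgate R t false false = (cos t)%:C. Proof. by rewrite WgateE. Qed.
Lemma Wft t : Wgate R t false true = - (sin t)%:C. Proof. by rewrite WgateE. Qed.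
Lemma Wtf t : Wgate R t true false = (sin t)%:C. Proof. by rewrite WgateE. Qed.
Lemma Wtt t : Wgate R t true true = (cos t)%:C. Proof. by rewrite WgateE. Qed.

Lemma Wconj t a b : (Wgate R t a b)^* = Wgate R t a b.
Proof.
by case: a; case: b; rewrite ?Wff ?Wft ?Wtf ?Wtt -?rmorphN conjc_real.
Qed.

Lemma gZ t : gmul (gadj (Wgate R t)) (gmul (sZ R) (Wgate R t)) =
  fun a b => ((cos t)%:C ^+ 2 - (sin t)%:C ^+ 2) * sZ R a b
             - (2 * (cos t)%:C * (sin t)%:C) * sX R a b.
Proof.
apply/funext => a; apply/funext => b; rewrite /gmul /gadj !big_bool /=.
by case: a; case: b; rewrite !Wconj ?Wff ?Wft ?Wtf ?Wtt /sZ /sX /=; ring.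
Qed.

Lemma gX t : gmul (gadj (Wgate R t)) (gmul (sX R) (Wgate R t)) =
  fun a b => (2 * (cos t)%:C * (sin t)%:C) * sZ R a b
             + ((cos t)%:C ^+ 2 - (sin t)%:C ^+ 2) * sX R a b.
Proof.
apply/funext => a; apply/funext => b; rewrite /gmul /gadj !big_bool /=.
by case: a; case: b; rewrite !Wconj ?Wff ?Wft ?Wtf ?Wtt /sZ /sX /=; ring.
Qed.

Lemma gI t : gmul (gadj (Wgate R t)) (gmul (sI R) (Wgate R t)) = sI R.
Proof.
have e : (cos t)%:C ^+ 2 + (sin t)%:C ^+ 2 = 1 :> R[i].
  by rewrite -!rmorphXn -rmorphD cos2Dsin2.
apply/funext => a; apply/funext => b; rewrite /gmul /gadj !big_bool /=.
case: a; case: b; rewrite !Wconj ?Wff ?Wft ?Wtf ?Wtt /sI /=; try (by ring);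
  rewrite -[X in _ = X]mulr1 -[X in _ = _ * X]e; ring.
Qed.


Definition zf {n} (v : basis n -> R[i]) := form (onq R n 1 (sZ R)) v.
Definition xf {n} (v : basis n -> R[i]) := form (onq R n 1 (sX R)) v.
Definition Nf {n} (v : basis n -> R[i]) := form (tens R n (fun _ => sI R)) v.

Lemma form_lin n (T1 T2 : op R n) a b v :
  form (fun x y => a * T1 x y + b * T2 x y) v = a * form T1 v + b * form T2 v.
Proof.
rewrite /form !mulr_sumr -big_split; apply: eq_bigr => x _.
rewrite !mulr_sumr -big_split; apply: eq_bigr => y _; rewrite /=; ring.
Qed.

Lemma onq1E n (G : gate1 R) x y :
  onq R n.+1 1 G x y = G (x ord0) (y ord0) *
     \prod_(i < n) sI R (x (lift ord0 i)) (y (lift ord0 i)).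
Proof. by rewrite /onq /tens big_ord_recl. Qed.

Lemma rotZ n (be : 'I_n.+1 -> R) v :
  zf (vapply (tens R n.+1 (fun k => Wgate R (be k))) v) =
  ((cos (be ord0))%:C ^+ 2 - (sin (be ord0))%:C ^+ 2) * zf v
  - (2 * (cos (be ord0))%:C * (sin (be ord0))%:C) * xf v.
Proof.
rewrite /zf /xf form_apply tens_adj {1}/onq !tens_mul.
set C := (_ ^+ 2 - _); set S := (2 * _ * _).
rewrite -mulNr -form_lin; congr form.
apply/funext => x; apply/funext => y; rewrite !onq1E /tens big_ord_recl /= gZ /=.
under eq_bigr do rewrite gI.
rewrite /C /S; ring.
Qed.

Lemma rotX n (be : 'I_n.+1 -> R) v :
  xf (vapply (tens R n.+1 (fun k => Wgate R (be k))) v) =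
  (2 * (cos (be ord0))%:C * (sin (be ord0))%:C) * zf v
  + ((cos (be ord0))%:C ^+ 2 - (sin (be ord0))%:C ^+ 2) * xf v.
Proof.
rewrite /zf /xf form_apply tens_adj {1}/onq !tens_mul.
set C := (_ ^+ 2 - _); set S := (2 * _ * _).
rewrite -form_lin; congr form.
apply/funext => x; apply/funext => y; rewrite !onq1E /tens big_ord_recl /= gX /=.
under eq_bigr do rewrite gI.
rewrite /C /S; ring.
Qed.

Lemma rotN n (be : 'I_n -> R) v :
  Nf (vapply (tens R n (fun k => Wgate R (be k))) v) = Nf v.
Proof.
rewrite /Nf form_apply tens_adj !tens_mul; congr form; congr tens.
by apply/funext => k; rewrite gI.
Qed.

Lemma tensI_diag n : tens R n (fun _ => sI R) = diagop (fun _ => 1).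
Proof.
rewrite -[RHS](_ : tens R n (fun k a b => (a == b)%:R * (fun _ _ => 1) k a) = _).
  by congr tens; apply/funext => k; apply/funext => a; apply/funext => b; rewrite mulr1.
rewrite tens_diag; congr diagop; apply/funext => x; exact: big1.
Qed.

Lemma onqZ_diag n : exists t, onq R n 1 (sZ R) = diagop t.
Proof.
rewrite /onq.
have -> : (fun k : 'I_n => if k.+1 == 1 then sZ R else sI R) =
   (fun k a' b' => (a' == b')%:R * (if k.+1 == 1 then (if a' then -1 else 1) else 1)).
  apply/funext => k; apply/funext => a'; apply/funext => b'.
  by case: ifP => _; case: a'; case: b'; rewrite /sZ /sI /= ?mulr1 ?mul1r ?mulr0 ?mul0r.
by rewrite tens_diag; eexists.
Qed.

Lemma zf_DU n (D : op R n) v : isDU D -> zf (vapply D v) = zf v.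
Proof.
case=> d [ud ->]; rewrite /zf; have [t ->] := onqZ_diag n; exact: form_DU.
Qed.

Lemma Nf_DU n (D : op R n) v : isDU D -> Nf (vapply D v) = Nf v.
Proof. by case=> d [ud ->]; rewrite /Nf tensI_diag; exact: form_DU. Qed.


Lemma Re_realM (a : R) (w : R[i]) : complex.Re (a%:C * w) = a * complex.Re w.
Proof. by case: w => x y /=; rewrite mul0r subr0. Qed.

Lemma gate_le1 (G : gate1 R) : (G = sZ R \/ G = sX R \/ G = sI R) -> forall a b, `|G a b| <= 1.
Proof.
by case=> [->|[->|->]] a b; case: a; case: b; rewrite /sZ /sX /sI /= ?normrN ?normr1 ?normr0 ?ler01.
Qed.

Lemma onq_le1 n (G : gate1 R) : (G = sZ R \/ G = sX R \/ G = sI R) ->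
  forall x y, `|onq R n 1 G x y| <= 1.
Proof.
move=> HG x y; rewrite /onq /tens normr_prod; apply: prodr_ile1 => k _.
rewrite normr_ge0 /=; case: ifP => _; first exact: gate_le1.
by apply: gate_le1; right; right.
Qed.

Lemma Nf_le1 n (v : basis n -> R[i]) : Nf v = 1 -> forall x, `|v x| <= 1.
Proof.
rewrite /Nf tensI_diag form_diag => H x.
have E : \sum_y `|v y| ^+ 2 = 1.
  by rewrite -H; apply: eq_bigr => y _; rewrite sqr_normc mulr1 mulrC.
have : `|v x| ^+ 2 <= 1.
  rewrite -E (bigD1 x) //= lerDl sumr_ge0 // => y _; exact: exprn_ge0.
by rewrite expr_le1.
Qed.

Lemma form_bound n (T : op R n) v : (forall x y, `|T x y| <= 1) -> Nf v = 1 ->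
  (complex.Re (form T v)) ^+ 2 <= ((#|{: basis n}| * #|{: basis n}|)%:R) ^+ 2.
Proof.
move=> HT Hv; have vb := @Nf_le1 n v Hv.
have H1 : `|form T v| <= ((#|{: basis n}| * #|{: basis n}|)%:R : R[i]).
  have SS : \sum_(x : basis n) \sum_(y : basis n) (1:R[i]) = (#|{: basis n}| * #|{: basis n}|)%:R.
    by rewrite sumr_const sumr_const natrM mulr_natr.
  rewrite /form -SS; apply: le_trans (ler_norm_sum _ _ _) _.
  apply: ler_sum => x _.
  apply: le_trans (ler_norm_sum _ _ _) _.
  apply: ler_sum => y _.
  rewrite !normrM normcJ.
  have h0 := normr_ge0 (v x); have h1 := normr_ge0 (v y); have h2 := normr_ge0 (T x y).
  have := vb x; have := vb y; have := HT x y.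
  set p := `|v x|; set q := `|v y|; set r := `|T x y| => Hr Hq Hp.
  have pr : p * r <= 1 by rewrite -(mulr1 1); apply: ler_pM.
  by rewrite -(mulr1 1); apply: ler_pM => //; rewrite mulr_ge0.
have H2 : `|complex.Re (form T v)| <= (#|{: basis n}| * #|{: basis n}|)%:R.
  rewrite -lecR rmorph_nat; exact: le_trans (normc_ge_Re _) H1.
rewrite -real_normK ?num_real //; apply: lerXn2r => //; rewrite ?nnegrE //.
Qed.

End Q.

Section M.
Context {R : realType}.

Definition zero {n} : basis n := [ffun _ => false].
Definition one {n} : basis n := [ffun _ => true].

Lemma opmul_id_r n (A : op R n) : opmul R n A (opid R n) = A.
Proof. by apply/funext => x; apply/funext => y; rewrite /opmul /opid sum_ind_r. Qed.

Lemma rho0E n : rho0 R n = diagop (fun z => (z == zero)%:R).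
Proof.
rewrite /rho0.
have -> : (fun _ : 'I_n => proj0 R) = (fun k a b => (a == b)%:R * (fun _ c => (~~ c)%:R) k a).
  apply/funext => k; apply/funext => a; apply/funext => b.
  by case: a; case: b; rewrite /proj0 /= ?mulr1 ?mul1r ?mulr0 ?mul0r.
rewrite tens_diag; congr diagop; apply/funext => z; rewrite -prod_eq_ind.
by apply: eq_bigr => k _; rewrite /zero ffunE; case: (z k).
Qed.

Lemma rho_inE n L b x y :
  rho_in R n L b x y = Ucirc R n L b x zero * (Ucirc R n L b y zero)^*.
Proof.
rewrite /rho_in /opprod /= opmul_id_r rho0E {1}/opmul.
set U := Ucirc R n L b.
transitivity (\sum_z (U x z * (U y z)^*) * (z == zero)%:R); last by rewrite sum_ind_r.
apply: eq_bigr => z _; rewrite /opmul /diagop /opadj.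
transitivity (U x z * ((z == zero)%:R * (U y z)^*)); last by ring.
congr (_ * _).
transitivity (\sum_w (z == w)%:R * ((z == zero)%:R * (U y w)^*)).
  by apply: eq_bigr => w _; ring.
by rewrite sum_ind_l.
Qed.

Lemma optr_rho n L b (T : op R n) :
  optr R n (opmul R n T (rho_in R n L b)) = form T (fun x => Ucirc R n L b x zero).
Proof.
rewrite /optr /form /opmul; apply: eq_bigr => x _; apply: eq_bigr => z _.
by rewrite rho_inE; ring.
Qed.

Lemma alphaE n L b : alpha R n (rho_in R n L b) =
  (complex.Re (xf (fun x => Ucirc R n L b x zero))) ^+ 2 +
  (complex.Re (zf (fun x => Ucirc R n L b x zero))) ^+ 2.
Proof. by rewrite /alpha !optr_rho. Qed.

Definition psiX n : basis n -> R[i] :=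
  fun w => opmul R n (tens R n (fun _ => sX R)) (opid R n) w zero.

Lemma psiXE n : psiX n = fun w => (w == one)%:R.
Proof.
apply/funext => w; rewrite /psiX opmul_id_r /tens -prod_eq_ind.
by apply: eq_bigr => k _; rewrite /zero /one !ffunE; case: (w k).
Qed.

Lemma onqZE n : onq R n 1 (sZ R) =
  diagop (fun x => \prod_(k < n) (if k.+1 == 1 then (if x k then -1 else 1) else 1)).
Proof.
rewrite /onq.
have -> : (fun k : 'I_n => if k.+1 == 1 then sZ R else sI R) =
   (fun k a' b' => (a' == b')%:R * (if k.+1 == 1 then (if a' then -1 else 1) else 1)).
  apply/funext => k; apply/funext => a'; apply/funext => b'.
  by case: ifP => _; case: a'; case: b'; rewrite /sZ /sI /= ?mulr1 ?mul1r ?mulr0 ?mul0r.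
by rewrite tens_diag.
Qed.

Lemma sum_ind_sq n (t : basis n -> R[i]) :
  \sum_x (((x == one)%:R : R[i])^* * t x * (x == one)%:R) = t one.
Proof.
rewrite (bigD1 one) //= eqxx mulr1n rmorph1 mulr1 mul1r big1 ?addr0 // => x /negbTE ->.
by rewrite mulr0n mulr0.
Qed.

Lemma zf_psiX n : zf (psiX n.+1) = -1.
Proof.
rewrite /zf onqZE form_diag psiXE sum_ind_sq big_ord_recl /= /one ffunE big1 ?mulr1 //.
Qed.

Lemma Nf_psiX n : Nf (psiX n) = 1.
Proof. by rewrite /Nf tensI_diag form_diag psiXE sum_ind_sq. Qed.


Definition st n (b : params R) i : basis n -> R[i] := vapply (Ulayers R n b i) (psiX n).

Lemma st_S n b i : st n b i.+1 =
  vapply (CZ1 R n) (vapply (Vlayer R n b i.*2.+2)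
    (vapply (CZ2 R n) (vapply (Vlayer R n b i.*2.+1) (st n b i)))).
Proof. by rewrite /st /= vapply_mul /Ulayer /opprod /= !vapply_mul vapply_id. Qed.

Lemma st0 n b : st n b 0 = psiX n.
Proof. by rewrite /st /= vapply_id. Qed.

Lemma Ucol n L b : (fun x => Ucirc R n L b x zero) = vapply (Vlayer R n b L.*2.+1) (st n b L).
Proof. by []. Qed.

Lemma Vlayer_upd n b j j' k t : j' != j -> Vlayer R n (upd R b (j, k) t) j' = Vlayer R n b j'.
Proof.
move=> jj; rewrite /Vlayer /upd; congr tens; apply/funext => kk.
by rewrite xpair_eqE (negbTE jj).
Qed.

Lemma Ulayers_upd n b i j k t : (i.*2 < j)%N -> Ulayers R n (upd R b (j, k) t) i = Ulayers R n b i.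
Proof.
elim: i => [//|i IH] H /=.
rewrite IH; last by apply: leq_trans H; rewrite doubleS ltnS leqW.
rewrite /Ulayer !Vlayer_upd //.
  by rewrite neq_ltn; apply/orP; left; move: H; rewrite doubleS /=; apply: leq_trans.
by rewrite neq_ltn H.
Qed.

Lemma st_upd n b i j k t : (i.*2 < j)%N -> st n (upd R b (j, k) t) i = st n b i.
Proof. by move=> H; rewrite /st Ulayers_upd. Qed.

Lemma NfV n b j v : Nf (vapply (Vlayer R n b j) v) = Nf v.
Proof. exact: (@rotN R n (fun k => b j k.+1) v). Qed.

Lemma Nf_st n b i : (2 <= n)%N -> Nf (st n b i) = 1.
Proof.
move=> n2; elim: i => [|i IH]; first by rewrite st0 Nf_psiX.
rewrite st_S Nf_DU; last exact: CZ1_DU.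
rewrite (NfV n b i.*2.+2 _).
rewrite Nf_DU; last exact: CZ2_DU.
by rewrite NfV.
Qed.

Definition Cr (t : R) := cos t ^+ 2 - sin t ^+ 2.
Definition Sr (t : R) := cos t * sin t *+ 2.

Lemma ReB (a b : R[i]) : complex.Re (a - b) = complex.Re a - complex.Re b.
Proof. by case: a => ? ?; case: b => ? ?. Qed.
Lemma ReD (a b : R[i]) : complex.Re (a + b) = complex.Re a + complex.Re b.
Proof. by case: a => ? ?; case: b => ? ?. Qed.

Lemma CrE t : (cos t)%:C ^+ 2 - (sin t)%:C ^+ 2 = (Cr t)%:C.
Proof. by rewrite /Cr rmorphB !rmorphXn. Qed.
Lemma SrE t : 2 * (cos t)%:C * (sin t)%:C = (Sr t)%:C.
Proof. rewrite /Sr rmorphMn rmorphM; ring. Qed.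

Lemma CS1 t : Cr t ^+ 2 + Sr t ^+ 2 = 1.
Proof.
rewrite /Cr /Sr -(expr1n _ 2) -(cos2Dsin2 t); ring.
Qed.

Lemma ReZV n b j v : complex.Re (zf (vapply (Vlayer R n.+1 b j) v)) =
  Cr (b j 1%N) * complex.Re (zf v) - Sr (b j 1%N) * complex.Re (xf v).
Proof. by rewrite /Vlayer (@rotZ R n (fun k => b j k.+1)) CrE SrE ReB !Re_realM. Qed.

Lemma ReXV n b j v : complex.Re (xf (vapply (Vlayer R n.+1 b j) v)) =
  Sr (b j 1%N) * complex.Re (zf v) + Cr (b j 1%N) * complex.Re (xf v).
Proof. by rewrite /Vlayer (@rotX R n (fun k => b j k.+1)) CrE SrE ReD !Re_realM. Qed.


Lemma expect_cons ps p (f : params R -> R) b :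
  expect R (p :: ps) f b = avg (fun t => expect R ps f (upd R b p t)).
Proof. by []. Qed.

Lemma expect_cat ps1 ps2 (f : params R -> R) b :
  expect R (ps1 ++ ps2) f b = expect R ps1 (expect R ps2 f) b.
Proof.
elim: ps1 b => [//|p ps1 IH] b.
rewrite cat_cons !expect_cons; congr avg; apply/funext => t; exact: IH.
Qed.

Lemma expect_bound ps (f : params R -> R) M : (forall b, 0 <= f b <= M) ->
  forall b, 0 <= expect R ps f b <= M.
Proof.
move=> fM; elim: ps => [//|p ps IH] b.
rewrite expect_cons; apply: avg_bound => t; exact: IH.
Qed.

Lemma expect_lb ps (G K : params R -> R) M : (forall b, 0 <= G b <= M) ->
  (forall b, 0 <= K b) -> (forall b, K b <= G b) ->
  (forall p, p \in ps -> forall b t, K (upd R b p t) = K b) ->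
  forall b, K b <= expect R ps G b.
Proof.
move=> GM K0 KG; elim: ps => [//|p ps IH] Kinv b.
have IH' : forall b, K b <= expect R ps G b.
  by apply: IH => q qps; apply: Kinv; rewrite inE qps orbT.
rewrite expect_cons.
have -> : K b = avg (fun _ => K b) by rewrite avg_cst.
apply: (avg_le (fun _ => K b) _ M) => t //.
  by rewrite -(Kinv p (mem_head _ _) b t); exact: IH'.
by have /andP[] := expect_bound ps _ _ GM (upd R b p t).
Qed.

Definition lay n (j : nat) : seq (nat * nat) := [seq (j, k) | k <- iota 1 n].

Lemma RS n j (G : params R -> R) (phi : params R -> basis n.+1 -> R[i]) c M :
  0 <= c -> (forall b, 0 <= G b <= M) ->
  (forall b k t, phi (upd R b (j, k) t) = phi b) ->
  (forall b, c * (complex.Re (zf (vapply (Vlayer R n.+1 b j) (phi b)))) ^+ 2 <= G b) ->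
  forall b, c / 2 * (complex.Re (zf (phi b))) ^+ 2 <= expect R (lay n.+1 j) G b.
Proof.
move=> c0 GM phiI GH b.
have -> : lay n.+1 j = (j, 1%N) :: [seq (j, k) | k <- iota 2 n] by [].
rewrite expect_cons.
pose H := fun b' => c * (Cr (b' j 1%N) * complex.Re (zf (phi b'))
                        - Sr (b' j 1%N) * complex.Re (xf (phi b'))) ^+ 2.
have H0 : forall b', 0 <= H b' by move=> b'; rewrite mulr_ge0 // sqr_ge0.
have HG : forall b', H b' <= G b' by move=> b'; rewrite /H -ReZV; exact: GH.
have Hinv : forall p, p \in [seq (j, k) | k <- iota 2 n] -> forall b' t, H (upd R b' p t) = H b'.
  move=> p /mapP [k kin ->] b' t; rewrite /H phiI.
  have -> : upd R b' (j, k) t j 1%N = b' j 1%N.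
    rewrite /upd xpair_eqE eqxx /=; case: eqP => // k1.
    by move: kin; rewrite mem_iota -k1.
  by [].
have lb := expect_lb _ _ _ _ GM H0 HG Hinv.
have bnd := expect_bound [seq (j, k) | k <- iota 2 n] _ _ GM.
have gM : forall t, expect R [seq (j, k) | k <- iota 2 n] G (upd R b (j, 1%N) t) <= M.
  by move=> t; have /andP[] := bnd (upd R b (j, 1%N) t).
apply: (le_trans _ (avg_le (fun t => H (upd R b (j, 1%N) t)) _ M (fun t => H0 _) (fun t => lb _) gM)).
have -> : (fun t => H (upd R b (j, 1%N) t)) =
   (fun t => c * ((cos t ^+ 2 - sin t ^+ 2) * complex.Re (zf (phi b))
                - (cos t * sin t *+ 2) * complex.Re (xf (phi b))) ^+ 2).
  by apply/funext => t; rewrite /H phiI /upd eqxx.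
rewrite avg_trig -subr_ge0.
set A := complex.Re (zf (phi b)); set B := complex.Re (xf (phi b)).
have -> : c * (A ^+ 2 + B ^+ 2) / 2 - c / 2 * A ^+ 2 = c / 2 * B ^+ 2 by ring.
by rewrite mulr_ge0 ?sqr_ge0 // divr_ge0.
Qed.


Lemma expect_catF ps1 ps2 (f : params R -> R) :
  expect R (ps1 ++ ps2) f = expect R ps1 (expect R ps2 f).
Proof. by apply/funext => b; exact: expect_cat. Qed.

Fixpoint pl n (i m : nat) : seq (nat * nat) :=
  match m with
  | 0 => lay n i.*2.+1
  | m'.+1 => lay n i.*2.+1 ++ lay n i.*2.+2 ++ pl n i.+1 m'
  end.

Lemma plE n m a : [seq (j, k) | j <- iota a.*2.+1 m.*2.+1, k <- iota 1 n] = pl n a m.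
Proof.
elim: m a => [|m IH] a; first by rewrite /= cats0.
rewrite -[pl n a m.+1]/(lay n a.*2.+1 ++ lay n a.*2.+2 ++ pl n a.+1 m) -IH.
by [].
Qed.

Lemma Re_N1 : complex.Re (-1 : R[i]) = -1.
Proof. by []. Qed.

End M.

Local Close Scope complex_scope.

Theorem theorem3 (R : realType) (n L : nat) :
  (2 <= n)%N -> ~~ odd n -> (1 <= L)%N ->
  (2 : R) ^- L.*2 <=
    expect R (all_params n L) (fun beta => alpha R n (rho_in R n L beta))
           (fun _ _ => 0).
Proof.
move=> n2 _ _; case: n n2 => [//|n] n2.
set f := fun beta => _.
pose K := ((#|{: basis n.+1}| * #|{: basis n.+1}|)%:R : R) ^+ 2.
have K0 : 0 <= K by rewrite /K sqr_ge0.
have fb : forall b, 0 <= f b <= K + K.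
  move=> b; rewrite /f alphaE.
  have Nps : Nf (fun x => Ucirc R n.+1 L b x zero) = 1 by rewrite Ucol NfV Nf_st.
  apply/andP; split; first by rewrite addr_ge0 ?sqr_ge0.
  apply: lerD; apply: form_bound => //; apply: onq_le1; [right; left | left] => //.
have flb : forall b, (complex.Re (zf (st n.+1 b L))) ^+ 2 <= f b.
  move=> b; rewrite /f alphaE Ucol ReXV ReZV.
  have e := CS1 (b L.*2.+1 1%N).
  set z := complex.Re (zf _); set x := complex.Re (xf _).
  set C := Cr _; set S := Sr _.
  have -> : (S * z + C * x) ^+ 2 + (C * z - S * x) ^+ 2 = (C ^+ 2 + S ^+ 2) * (x ^+ 2 + z ^+ 2) by ring.
  by rewrite e mul1r lerDr sqr_ge0.
have claim : forall m i, (i + m = L)%N -> forall b,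
    ((2 : R) ^+ m.*2)^-1 * (complex.Re (zf (st n.+1 b i))) ^+ 2 <= expect R (pl n.+1 i m) f b.
  elim => [|m IH] i iL b.
    rewrite addn0 in iL; subst i; rewrite /= expr0 invr1 mul1r.
    apply: (expect_lb (lay n.+1 L.*2.+1) f (fun b => (complex.Re (zf (st n.+1 b L))) ^+ 2) (K + K) fb) => //.
    - by move=> b'; exact: sqr_ge0.
    - by move=> p /mapP [k _ ->] b' t; rewrite st_upd.
  have cm0 : 0 <= ((2 : R) ^+ m.*2)^-1 by rewrite invr_ge0 exprn_ge0.
  rewrite -[pl n.+1 i m.+1]/(lay n.+1 i.*2.+1 ++ lay n.+1 i.*2.+2 ++ pl n.+1 i.+1 m) !expect_catF.
  set G2 := expect R (pl n.+1 i.+1 m) f.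
  have G2b := expect_bound (pl n.+1 i.+1 m) f (K + K) fb.
  have iL' : (i.+1 + m = L)%N by rewrite addSnnS.
  have IH' := IH i.+1 iL'.
  pose phi2 := fun b => vapply (CZ2 R n.+1) (vapply (Vlayer R n.+1 b i.*2.+1) (st n.+1 b i)).
  have step1 := @RS R n i.*2.+2 G2 phi2 _ (K + K) cm0 G2b.
  have step1' : forall b, ((2 : R) ^+ m.*2)^-1 / 2 * (complex.Re (zf (phi2 b))) ^+ 2 <=
                 expect R (lay n.+1 i.*2.+2) G2 b.
    apply: step1.
      move=> b' k t; rewrite /phi2 st_upd ?Vlayer_upd //.
      by rewrite neq_ltn ltnSn.
    by move=> b'; have := IH' b'; rewrite st_S zf_DU //; exact: CZ1_DU.
  set G1 := expect R (lay n.+1 i.*2.+2) G2.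
  have G1b := expect_bound (lay n.+1 i.*2.+2) G2 (K + K) G2b.
  have cm1 : 0 <= ((2 : R) ^+ m.*2)^-1 / 2 by rewrite divr_ge0.
  have step2 := @RS R n i.*2.+1 G1 (fun b => st n.+1 b i) _ (K + K) cm1 G1b.
  have -> : ((2 : R) ^+ m.+1.*2)^-1 = ((2 : R) ^+ m.*2)^-1 / 2 / 2.
    by rewrite doubleS !exprS !invfM; ring.
  apply: step2.
    by move=> b' k t; rewrite st_upd.
  by move=> b'; have := step1' b'; rewrite /phi2 zf_DU //; exact: CZ2_DU.
have := claim L 0%N (add0n L) (fun _ _ => 0).
rewrite st0 zf_psiX Re_N1 sqrrN expr1n mulr1 -plE.
by [].
Qed.
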